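(* A circular net $f:\mathbb Z^m\to\mathbb R^N$ (in general position) is discrete isothermic if and only if there exists a real-valued edge labelling $(\alpha_1,\dots,\alpha_m)$ of $\mathbb Z^m$ such that for every $u$ and $i\ne j$, $$q(f,f_i,f_{ij},f_j)=\frac{\alpha_i}{\alpha_j}.$$
   Context: Notation: for $f:\mathbb Z^m\to\mathbb R^N$, $f=f(u)$, $f_i=f(u+e_i)$, $f_{ij}=f(u+e_i+e_j)$ with $e_i$ the unit vectors. A Q-net is a map such that each elementary quadrilateral $(f,f_i,f_{ij},f_j)$ ($i\ne j$) is planar, assumed non-degenerate (distinct vertices, no three collinear, diagonals meeting in a point distinct from the vertices). Two planar quadrilaterals $(A,B,C,D)$, $(A^*,B^*,C^*,D^* )$ are dual if $A^*B^*\parallel AB$, $B^*C^*\parallel BC$, $C^*D^*\parallel CD$, $D^*A^*\parallel DA$, $A^*C^*\parallel BD$, $B^*D^*\parallel AC$. A Q-net $f$ is a discrete Koenigs net if there is a Q-net $f^*$ with every $(f^*,f^*_i,f^*_{ij},f^*_j)$ dual to $(f,f_i,f_{ij},f_j)$. A circular net is a Q-net all of whose elementary quadrilaterals have their four vertices on a circle. A discrete isothermic net is a circular net which is a discrete Koenigs net. For four concircular points $a,b,c,d\in\mathbb R^N$, their cross-ratio is $q(a,b,c,d)=(a-b)(b-c)^{-1}(c-d)(d-a)^{-1}$, computed after identifying a $2$-plane containing them with $\mathbb C$; it is real. An edge labelling is a system of real functions $\alpha_i$ ($i=1,\dots,m$) on the edges of $\mathbb Z^m$ parallel to the $i$-th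 axis, taking equal values on opposite edges of every elementary square; equivalently, $\alpha_i(u)$ (the value on the edge $(u,u+e_i)$) depends only on $u_i$. *)

(* Defs.v *)
From Stdlib Require Import Reals ZArith.
From mathcomp Require Import all_boot.
Set Implicit Arguments. Unset Strict Implicit. Unset Printing Implicit Defensive.
Open Scope R_scope.

Definition Vec (N : nat) := 'I_N -> R.

Section Vectors.
Variable N : nat.
Implicit Types x y : Vec N.
Definition vzero : Vec N := fun _ => 0.
Definition vadd x y : Vec N := fun k => x k + y k.
Definition vsub x y : Vec N := fun k => x k - y k.
Definition vscale (r : R) x : Vec N := fun k => r * x k.
Definition dot x y : R := \big[Rplus/0]_(k < N) (x k * y k).

Definition lin_dep2 (u v : Vec N) : Prop :=
  exists l1 l2 : R, (l1 <> 0 \/ l2 <> 0) /\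
    vadd (vscale l1 u) (vscale l2 v) = vzero.
Definition lin_dep3 (u v w : Vec N) : Prop :=
  exists l1 l2 l3 : R, (l1 <> 0 \/ l2 <> 0 \/ l3 <> 0) /\
    vadd (vadd (vscale l1 u) (vscale l2 v)) (vscale l3 w) = vzero.

Definition collinear (A B C : Vec N) : Prop := lin_dep2 (vsub B A) (vsub C A).
Definition planar4 (A B C D : Vec N) : Prop :=
  lin_dep3 (vsub B A) (vsub C A) (vsub D A).
Definition on_line (P A B : Vec N) : Prop :=
  exists s : R, P = vadd A (vscale s (vsub B A)).
Definition parallel (u v : Vec N) : Prop := lin_dep2 u v.

Definition nondeg_quad (A B C D : Vec N) : Prop :=
  [/\ A <> B, A <> C, A <> D & B <> C] /\ (B <> D /\ C <> D) /\
  [/\ ~ collinear A B C, ~ collinear A B D, ~ collinear A C D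
    & ~ collinear B C D] /\
  (exists P : Vec N, on_line P A C /\ on_line P B D /\
     [/\ P <> A, P <> B, P <> C & P <> D]).

Definition good_quad (A B C D : Vec N) : Prop :=
  planar4 A B C D /\ nondeg_quad A B C D.

Definition dual_quads (A B C D A' B' C' D' : Vec N) : Prop :=
  [/\ parallel (vsub B' A') (vsub B A), parallel (vsub C' B') (vsub C B),
      parallel (vsub D' C') (vsub D C) & parallel (vsub A' D') (vsub A D)] /\
  (parallel (vsub C' A') (vsub D B) /\ parallel (vsub D' B') (vsub C A)).

(* the four points lie on a circle: a circle is the set of points of an
   affine 2-plane c + span(e1,e2) (e1, e2 orthonormal) at distance rho > 0
   from the center c *)
Definition on_circle (c e1 e2 : Vec N) (rho : R) (X : Vec N) : Prop :=
  (exists x y : R, X = vadd c (vadd (vscale x e1) (vscale y e2))) /\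
  dot (vsub X c) (vsub X c) = rho * rho.
Definition concircular (A B C D : Vec N) : Prop :=
  exists (c e1 e2 : Vec N) (rho : R),
    [/\ dot e1 e1 = 1, dot e2 e2 = 1, dot e1 e2 = 0 & 0 < rho] /\
    [/\ on_circle c e1 e2 rho A, on_circle c e1 e2 rho B,
        on_circle c e1 e2 rho C & on_circle c e1 e2 rho D].

Definition C := (R * R)%type.
Definition csub (z w : C) : C := (fst z - fst w, snd z - snd w).
Definition cmul (z w : C) : C :=
  (fst z * fst w - snd z * snd w, fst z * snd w + snd z * fst w).
Definition cinv (z : C) : C :=
  let n := fst z * fst z + snd z * snd z in (fst z / n, - snd z / n).

(* Cross-ratio of four (concircular) points a b c d of R^N:
   identify the 2-plane through a spanned by b - a and d - a with C via the
   orthonormal frame (origin a, e1, e2) obtained by Gram-Schmidt, then compute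
   q = (a-b)(b-c)^{-1}(c-d)(d-a)^{-1} in C. *)
Definition cross_ratio (a b c d : Vec N) : C :=
  let v := vsub b a in
  let e1 := vscale (/ sqrt (dot v v)) v in
  let w0 := vsub (vsub d a) (vscale (dot (vsub d a) e1) e1) in
  let e2 := vscale (/ sqrt (dot w0 w0)) w0 in
  let z (X : Vec N) : C := (dot (vsub X a) e1, dot (vsub X a) e2) in
  cmul (cmul (cmul (csub (z a) (z b)) (cinv (csub (z b) (z c))))
             (csub (z c) (z d)))
       (cinv (csub (z d) (z a))).
End Vectors.

Definition lshift_e (m : nat) (u : 'I_m -> Z) (i : 'I_m) : 'I_m -> Z :=
  fun k => if k == i then (u k + 1)%Z else u k.

Section Nets.
Variables m N : nat.
Implicit Types f : ('I_m -> Z) -> Vec N.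

Definition Qnet f : Prop :=
  forall (u : 'I_m -> Z) (i j : 'I_m), i <> j ->
    good_quad (f u) (f (lshift_e u i)) (f (lshift_e (lshift_e u i) j)) (f (lshift_e u j)).

Definition koenigs f : Prop :=
  exists fs : ('I_m -> Z) -> Vec N, Qnet fs /\
    forall (u : 'I_m -> Z) (i j : 'I_m), i <> j ->
      dual_quads (f u) (f (lshift_e u i)) (f (lshift_e (lshift_e u i) j)) (f (lshift_e u j))
                 (fs u) (fs (lshift_e u i)) (fs (lshift_e (lshift_e u i) j)) (fs (lshift_e u j)).

Definition circular_net f : Prop :=
  Qnet f /\
  forall (u : 'I_m -> Z) (i j : 'I_m), i <> j ->
    concircular (f u) (f (lshift_e u i)) (f (lshift_e (lshift_e u i) j)) (f (lshift_e u j)).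

Definition isothermic f : Prop := circular_net f /\ koenigs f.
End Nets.

(* Main.v *)
Require Import Defs.
From Stdlib Require Import Reals ZArith.
From mathcomp Require Import all_boot.
Open Scope R_scope.

From HB Require Import structures.
From Stdlib Require Import Lra Lia Field FunctionalExtensionality.
Import Defs.
Open Scope R_scope.
Set Implicit Arguments. Unset Strict Implicit.


Definition c0 : C := (0,0).
Definition c1 : C := (1,0).
Definition cadd (z w : C) : C := (fst z + fst w, snd z + snd w).
Definition copp (z : C) : C := (- fst z, - snd z).
Definition cdiv (z w : C) : C := cmul z (cinv w).
Definition cconj (z : C) : C := (fst z, - snd z).
Definition RC (r : R) : C := (r, 0).

Lemma Cpair (z : C) : z = (fst z, snd z). Proof. by case: z. Qed.
Lemma Ceq (z w : C) : fst z = fst w -> snd z = snd w -> z = w.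
Proof. case: z; case: w => /= ? ? ? ? -> -> //. Qed.

Lemma Cring : ring_theory c0 c1 cadd cmul csub copp (@eq C).
Proof.
split; intros; apply Ceq; rewrite /cadd /cmul /csub /copp /c0 /c1 /=; ring.
Qed.

Lemma Cnz (z : C) : z <> c0 -> fst z * fst z + snd z * snd z <> 0.
Proof.
case: z => x y /= H Hn; apply H.
have hx : x = 0 by nra. have hy : y = 0 by nra. by rewrite hx hy.
Qed.

Lemma Cfield : field_theory c0 c1 cadd cmul csub copp cdiv cinv (@eq C).
Proof.
split.
- exact Cring.
- rewrite /c1 /c0 => H; injection H; lra.
- by [].
- move=> p Hp; have hn := @Cnz p Hp; move: hn; case: p {Hp} => x y /= hn.
  apply Ceq; rewrite /cmul /cinv /c1 /=; field; exact hn.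
Qed.

Add Field Cfield_inst : Cfield.
Declare Scope C_scope.
Delimit Scope C_scope with C.
Notation "x + y" := (cadd x y) : C_scope.
Notation "x * y" := (cmul x y) : C_scope.
Notation "x - y" := (csub x y) : C_scope.
Notation "- x" := (copp x) : C_scope.
Notation "x / y" := (cdiv x y) : C_scope.
Notation "/ x" := (cinv x) : C_scope.

Lemma test (a b : C) : b <> c0 -> ((a * b) / b = a)%C.
Proof. move=> H. field. exact H. Qed.


Lemma RplusA : associative Rplus. Proof. move=> *; ring. Qed.
HB.instance Definition _ := Monoid.isComLaw.Build R 0 Rplus RplusA Rplus_comm Rplus_0_l.

Section V.
Variable N : nat.
Implicit Types x y z : Vec N.

Lemma vext x y : (forall k, x k = y k) -> x = y.
Proof. move=> H; apply functional_extensionality => k; exact: H. Qed.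

Lemma dot_addl x y z : dot (vadd x y) z = dot x z + dot y z.
Proof. rewrite /dot /vadd -big_split /=; apply eq_bigr => k _; ring. Qed.
Lemma dot_scalel r x z : dot (vscale r x) z = r * dot x z.
Proof.
rewrite /dot /vscale; elim/big_rec2: _ => [|k a b _ ->]; ring.
Qed.
Lemma dotC x y : dot x y = dot y x.
Proof. rewrite /dot; apply eq_bigr => k _; ring. Qed.
Lemma dot_subl x y z : dot (vsub x y) z = dot x z - dot y z.
Proof. rewrite /dot /vsub; elim/big_rec3: _ => [|k a b c _ ->]; ring. Qed.
Lemma dot_addr x y z : dot z (vadd x y) = dot z x + dot z y.
Proof. by rewrite dotC dot_addl dotC (dotC y). Qed.
Lemma dot_scaler r x z : dot z (vscale r x) = r * dot z x.
Proof. by rewrite dotC dot_scalel dotC. Qed.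
Lemma dot_subr x y z : dot z (vsub x y) = dot z x - dot z y.
Proof. by rewrite dotC dot_subl dotC (dotC y). Qed.
Lemma dot0l z : dot (@vzero N) z = 0.
Proof. rewrite /dot /vzero; elim/big_rec: _ => [|k a _ ->]; ring. Qed.
Lemma dot_ge0 x : 0 <= dot x x.
Proof. rewrite /dot; elim/big_rec: _ => [|k a _ H]; nra. Qed.
Lemma big_sq_ge0 (x : Vec N) (P : pred 'I_N) : 0 <= \big[Rplus/0]_(i < N | P i) (x i * x i).
Proof. elim/big_rec: _ => [|i a _ Ha]; nra. Qed.
Lemma dot_eq0 x : dot x x = 0 -> x = @vzero N.
Proof.
move=> H; apply vext => k; rewrite /vzero.
move: H; rewrite /dot (bigD1 k) //=.
move=> H; set S := (X in _ + X = _) in H.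
have H2 : 0 <= S by apply: big_sq_ge0.
nra.
Qed.
Lemma vsubxx x : vsub x x = @vzero N.
Proof. apply vext => k; rewrite /vsub /vzero; ring. Qed.
End V.


Definition cross (p q : C) := fst p * snd q - snd p * fst q.

Section F.
Variable N : nat.
Implicit Types x y z A B D Y Z : Vec N.

Definition kap (e1 e2 Y : Vec N) : C := (dot Y e1, dot Y e2).
Definition inspan (e1 e2 Y : Vec N) := exists a b, Y = vadd (vscale a e1) (vscale b e2).
Definition ortho (e1 e2 : Vec N) := [/\ dot e1 e1 = 1, dot e2 e2 = 1 & dot e1 e2 = 0].

Variables e1 e2 : Vec N.
Hypothesis Ho : ortho e1 e2.

Lemma kap_comb a b : kap e1 e2 (vadd (vscale a e1) (vscale b e2)) = (a, b).
Proof.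
case: Ho => h11 h22 h12.
rewrite /kap !dot_addl !dot_scalel h11 h22 h12 (dotC e2 e1) h12; apply Ceq => /=; ring.
Qed.

Lemma inspan_kap Y : inspan e1 e2 Y -> Y = vadd (vscale (fst (kap e1 e2 Y)) e1) (vscale (snd (kap e1 e2 Y)) e2).
Proof. case=> a [b ->]; by rewrite kap_comb. Qed.

Lemma inspan_add Y Z : inspan e1 e2 Y -> inspan e1 e2 Z -> inspan e1 e2 (vadd Y Z).
Proof.
case=> a [b ->] [c [d ->]]; exists (a + c), (b + d); apply vext => k.
rewrite /vadd /vscale; ring.
Qed.
Lemma inspan_sub Y Z : inspan e1 e2 Y -> inspan e1 e2 Z -> inspan e1 e2 (vsub Y Z).
Proof.
case=> a [b ->] [c [d ->]]; exists (a - c), (b - d); apply vext => k.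
rewrite /vsub /vadd /vscale; ring.
Qed.
Lemma inspan_scale r Y : inspan e1 e2 Y -> inspan e1 e2 (vscale r Y).
Proof.
case=> a [b ->]; exists (r * a), (r * b); apply vext => k.
rewrite /vadd /vscale; ring.
Qed.

Lemma kap_add Y Z : kap e1 e2 (vadd Y Z) = cadd (kap e1 e2 Y) (kap e1 e2 Z).
Proof. by rewrite /kap /cadd !dot_addl. Qed.
Lemma kap_sub Y Z : kap e1 e2 (vsub Y Z) = csub (kap e1 e2 Y) (kap e1 e2 Z).
Proof. by rewrite /kap /csub !dot_subl. Qed.
Lemma kap_scale r Y : kap e1 e2 (vscale r Y) = cmul (RC r) (kap e1 e2 Y).
Proof. rewrite /kap /cmul /RC !dot_scalel; apply Ceq => /=; ring. Qed.

Lemma kap0 Y : inspan e1 e2 Y -> kap e1 e2 Y = c0 -> Y = @vzero N.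
Proof.
move=> HY E; rewrite (inspan_kap HY) E; apply vext => k; rewrite /vadd /vscale /vzero /c0 /=; ring.
Qed.

Lemma kap_inj Y Z : inspan e1 e2 Y -> inspan e1 e2 Z -> kap e1 e2 Y = kap e1 e2 Z -> Y = Z.
Proof.
move=> HY HZ E; rewrite (inspan_kap HY) (inspan_kap HZ) E //.
Qed.

Lemma dot_kap Y Z : inspan e1 e2 Y -> inspan e1 e2 Z ->
  dot Y Z = fst (kap e1 e2 Y) * fst (kap e1 e2 Z) + snd (kap e1 e2 Y) * snd (kap e1 e2 Z).
Proof.
move=> /inspan_kap EY /inspan_kap EZ.
rewrite {1}EY {1}EZ.
set a := fst _; set b := snd _; set c := fst _; set d := snd (kap e1 e2 Z).
case: Ho => h11 h22 h12.
rewrite !dot_addl !dot_addr !dot_scalel !dot_scaler h11 h22 (dotC e2 e1) h12; ring.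
Qed.

Lemma lin_dep2_cross Y Z : inspan e1 e2 Y -> inspan e1 e2 Z ->
  lin_dep2 Y Z <-> cross (kap e1 e2 Y) (kap e1 e2 Z) = 0.
Proof.
move=> HY HZ; split.
- case=> l1 [l2 [Hl E]].
  have E1 := f_equal (fun V => dot V e1) E.
  have E2 := f_equal (fun V => dot V e2) E.
  rewrite /= !dot_addl !dot_scalel !dot0l in E1 E2.
  rewrite /cross /kap /=.
  case: Hl => Hl.
  + apply (Rmult_eq_reg_l l1); last exact Hl.
    transitivity ((l1 * dot Y e1 + l2 * dot Z e1) * dot Z e2 - (l1 * dot Y e2 + l2 * dot Z e2) * dot Z e1); first ring.
    rewrite E1 E2; ring.
  + apply (Rmult_eq_reg_l l2); last exact Hl.
    transitivity (- (l1 * dot Y e1 + l2 * dot Z e1) * dot Y e2 + (l1 * dot Y e2 + l2 * dot Z e2) * dot Y e1); first ring.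
    rewrite E1 E2; ring.
- rewrite /cross => Hc.
  case: (Req_dec (dot Z Z) 0) => HZZ.
  + exists 0, 1; split; first by right; lra.
    rewrite (dot_eq0 HZZ); apply vext => k; rewrite /vadd /vscale /vzero; ring.
  + exists (dot Z Z), (- dot Y Z); split; first by left.
    apply kap0.
    * apply inspan_add; apply inspan_scale => //.
    * rewrite kap_add !kap_scale (dot_kap HZ HZ) (dot_kap HY HZ).
      move: Hc; case: (kap e1 e2 Y) => y1 y2; case: (kap e1 e2 Z) => z1 z2 /= Hc.
      apply Ceq; rewrite /cadd /cmul /RC /c0 /=.
      - transitivity (z2 * (y1 * z2 - y2 * z1)); [ring | rewrite Hc; ring].
      - transitivity (- z1 * (y1 * z2 - y2 * z1)); [ring | rewrite Hc; ring].
Qed.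
End F.

Section Frame.
Variable N : nat.
Implicit Types A B D : Vec N.

Definition fe1 A B : Vec N :=
  let v := vsub B A in vscale (/ sqrt (dot v v)) v.
Definition fe2 A B D : Vec N :=
  let e1 := fe1 A B in
  let w0 := vsub (vsub D A) (vscale (dot (vsub D A) e1) e1) in
  vscale (/ sqrt (dot w0 w0)) w0.

Lemma frame A B D : ~ collinear A B D ->
  [/\ ortho (fe1 A B) (fe2 A B D), inspan (fe1 A B) (fe2 A B D) (vsub B A)
    & inspan (fe1 A B) (fe2 A B D) (vsub D A)].
Proof.
move=> Hnc.
set v := vsub B A.
have vvpos : 0 < dot v v.
  case: (Rle_lt_or_eq_dec _ _ (dot_ge0 v)) => // /esym /dot_eq0 Hv.
  case: Hnc; exists 1, 0; split; first by left; lra.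
  rewrite -/v Hv; apply vext => k; rewrite /vadd /vscale /vzero; ring.
have sv : 0 < sqrt (dot v v) by apply sqrt_lt_R0.
have sv2 : sqrt (dot v v) * sqrt (dot v v) = dot v v by apply sqrt_sqrt; lra.
set e1 := fe1 A B.
have h11 : dot e1 e1 = 1.
  rewrite /e1 /fe1 -/v dot_scalel dot_scaler.
  field_simplify_eq; [lra | lra].
set t := dot (vsub D A) e1.
set w0 := vsub (vsub D A) (vscale t e1).
have w0e1 : dot w0 e1 = 0 by rewrite /w0 dot_subl dot_scalel h11 /t; ring.
have wwpos : 0 < dot w0 w0.
  case: (Rle_lt_or_eq_dec _ _ (dot_ge0 w0)) => // /esym /dot_eq0 Hw.
  case: Hnc; exists (t / sqrt (dot v v)), (-1); split; first by right; lra.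
  have : vsub D A = vscale t e1.
    apply vext => k; move: (f_equal (fun V => V k) Hw).
    rewrite /w0 /vsub /vzero /= => Hk; lra.
  move=> ->; apply vext => k; rewrite /vadd /vscale /e1 /fe1 -/v /vzero.
  unfold vscale; field; lra.
have sw : 0 < sqrt (dot w0 w0) by apply sqrt_lt_R0.
have sw2 : sqrt (dot w0 w0) * sqrt (dot w0 w0) = dot w0 w0 by apply sqrt_sqrt; lra.
have E2 : fe2 A B D = vscale (/ sqrt (dot w0 w0)) w0 by [].
rewrite E2.
split.
- split => //.
  + rewrite dot_scalel dot_scaler; field_simplify_eq; [lra | lra].
  + by rewrite dot_scaler dotC w0e1; ring.
- exists (sqrt (dot v v)), 0; apply vext => k.
  rewrite /vadd /vscale /e1 /fe1 -/v; unfold vscale; field; lra.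
- exists t, (sqrt (dot w0 w0)); apply vext => k.
  rewrite /vadd /vscale -Rmult_assoc Rinv_r; last lra.
  rewrite /w0 /vsub /vscale; ring.
Qed.

Definition Qf (a Cc d : C) : C :=
  cmul (cmul (cmul (csub (0,0) a) (cinv (csub a Cc))) (csub Cc d)) (cinv (csub d (0,0))).

Lemma cross_ratio_Qf A B Cc D :
  cross_ratio A B Cc D = Qf (kap (fe1 A B) (fe2 A B D) (vsub B A))
     (kap (fe1 A B) (fe2 A B D) (vsub Cc A)) (kap (fe1 A B) (fe2 A B D) (vsub D A)).
Proof. by rewrite /cross_ratio /= vsubxx !dot0l. Qed.
End Frame.


Definition cn (z : C) := fst z * fst z + snd z * snd z.

Lemma cnz_pos z : z <> c0 -> cn z <> 0.
Proof. exact: Cnz. Qed.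

Lemma conj_add x y : cconj (cadd x y) = cadd (cconj x) (cconj y).
Proof. apply Ceq; rewrite /=; ring. Qed.
Lemma conj_sub x y : cconj (csub x y) = csub (cconj x) (cconj y).
Proof. apply Ceq; rewrite /=; ring. Qed.
Lemma conj_mul x y : cconj (cmul x y) = cmul (cconj x) (cconj y).
Proof. apply Ceq; rewrite /=; ring. Qed.
Lemma conj_RC r : cconj (RC r) = RC r.
Proof. apply Ceq; rewrite /=; ring. Qed.
Lemma conj_inv x : x <> c0 -> cconj (cinv x) = cinv (cconj x).
Proof.
move=> /cnz_pos; rewrite /cn; case: x => x1 x2 /= H.
apply Ceq; rewrite /=; field; contradict H; nra.
Qed.
Lemma conj_conj x : cconj (cconj x) = x.
Proof. apply Ceq; rewrite /=; ring. Qed.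
Lemma conj_nz x : x <> c0 -> cconj x <> c0.
Proof. move=> H E; apply H; rewrite -(conj_conj x) E; apply Ceq; rewrite /=; ring. Qed.
Lemma conj_eq x : x <> c0 -> cconj x = cmul (RC (cn x)) (cinv x).
Proof.
move=> /cnz_pos; rewrite /cn; case: x => x1 x2 /= H.
apply Ceq; rewrite /=; field; exact H.
Qed.
Lemma RC_add x y : RC (x + y) = cadd (RC x) (RC y).
Proof. apply Ceq; rewrite /=; ring. Qed.
Lemma RC_sub x y : RC (x - y) = csub (RC x) (RC y).
Proof. apply Ceq; rewrite /=; ring. Qed.
Lemma RC_mul x y : RC (x * y) = cmul (RC x) (RC y).
Proof. apply Ceq; rewrite /=; ring. Qed.
Lemma RC_nz x : x <> 0 -> RC x <> c0.
Proof. move=> H E; apply H; by case: E. Qed.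
Lemma RC_div x y : y <> 0 -> RC (x / y) = cdiv (RC x) (RC y).
Proof. move=> H; apply Ceq; rewrite /cdiv /=; field; exact H. Qed.
Lemma snd_RCmul r z : snd (cmul (RC r) z) = r * snd z.
Proof. rewrite /=; ring. Qed.
Lemma cross_conj x y : cross x y = snd (cmul (cconj x) y).
Proof. rewrite /cross /=; ring. Qed.
Lemma sub_nz x y : x <> y -> csub x y <> c0.
Proof.
move=> H E; apply H; case: x y E H => x1 x2 [y1 y2] [] /= E1 E2 _.
apply Ceq; rewrite /=; lra.
Qed.
Lemma sub_nz' x y : csub x y <> c0 -> csub y x <> c0.
Proof.
move=> H E; apply H; case: x y E H => x1 x2 [y1 y2] [] /= E1 E2 _.
apply Ceq; rewrite /=; lra.
Qed.
Lemma csub0 x : csub x c0 = x.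
Proof. apply Ceq; rewrite /=; ring. Qed.

Definition wd (z : C) (r : R) : C := cmul (RC r) (cinv (cconj z)).
Lemma conj_wd z r : z <> c0 -> cconj (wd z r) = cmul (RC r) (cinv z).
Proof. move=> H; rewrite /wd conj_mul conj_RC conj_inv ?conj_conj //; exact: conj_nz. Qed.

Lemma Qf_eq a Cc d : Qf a Cc d = cdiv (cmul (cdiv (csub c0 a) (csub a Cc)) (csub Cc d)) (csub d c0).
Proof. by []. Qed.

Lemma core_back a Cc d ai aj :
  a <> c0 -> Cc <> a -> d <> c0 -> Cc <> d -> aj <> 0 ->
  Qf a Cc d = RC (ai / aj) ->
  [/\ cadd (wd a ai) (wd (csub Cc a) aj) = cadd (wd (csub Cc d) ai) (wd d aj),
      cross (cadd (wd a ai) (wd (csub Cc a) aj)) (csub d a) = 0 &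
      cross (csub (wd d aj) (wd a ai)) Cc = 0].
Proof.
move=> Ha Hb Hd Hc Haj HQ.
have nb := sub_nz Hb. have nc := sub_nz Hc. have nb' := sub_nz' nb.
have Hj := RC_nz Haj.
have Hai : RC ai = cmul (Qf a Cc d) (RC aj).
  rewrite HQ RC_div //; field; exact Hj.
split.
- apply: (can_inj conj_conj).
  rewrite !conj_add !conj_wd // Hai Qf_eq csub0.
  field; repeat split => //.
- rewrite cross_conj conj_add !conj_wd //.
  have -> : cmul (cadd (cmul (RC ai) (cinv a)) (cmul (RC aj) (cinv (csub Cc a)))) (csub d a)
            = csub (RC aj) (RC ai).
    rewrite Hai Qf_eq csub0; field; repeat split => //.
  rewrite /=; ring.
- rewrite cross_conj conj_sub !conj_wd //.
  have -> : cmul (csub (cmul (RC aj) (cinv d)) (cmul (RC ai) (cinv a))) Cc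
            = csub (RC aj) (RC ai).
    rewrite Hai Qf_eq csub0; field; repeat split => //.
  rewrite /=; ring.
Qed.

Lemma conjRCm s z : z <> c0 -> cconj (cmul (RC s) z) = cmul (RC (s * cn z)) (cinv z).
Proof.
move=> Hz; rewrite conj_mul conj_RC conj_eq // RC_mul.
have := cnz_pos Hz => hn.
apply Ceq; rewrite /=; ring.
Qed.

Lemma snd_div_cross a Cc : a <> c0 -> snd (cdiv Cc a) = cross a Cc / cn a.
Proof.
move=> /cnz_pos; rewrite /cn /cross; case: a => a1 a2 /= H; rewrite /=; field; exact H.
Qed.

Lemma cross_RCr b r z : cross b (cmul (RC r) z) = r * cross b z.
Proof. rewrite /cross /=; ring. Qed.
Lemma cross_self b : cross b b = 0.
Proof. rewrite /cross; ring. Qed.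

Lemma core_fwd a Cc d sa sb sc sd :
  a <> c0 -> Cc <> a -> d <> c0 -> Cc <> d ->
  cadd (cmul (RC sa) a) (cmul (RC sb) (csub Cc a)) =
    cadd (cmul (RC sc) (csub Cc d)) (cmul (RC sd) d) ->
  cross (csub (cmul (RC sd) d) (cmul (RC sa) a)) Cc = 0 ->
  snd (Qf a Cc d) = 0 ->
  cross a Cc <> 0 -> cross (csub Cc a) (csub Cc d) <> 0 -> sd <> 0 ->
  [/\ sa * cn a = sc * cn (csub Cc d), sb * cn (csub Cc a) = sd * cn d &
      Qf a Cc d = RC (sa * cn a / (sd * cn d))].
Proof.
move=> Ha Hb Hd Hc Hcl Hd2 Hre Hx1 Hx2 Hsd.
have nb := sub_nz Hb. have nc := sub_nz Hc. have nb' := sub_nz' nb.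
set Q := Qf a Cc d.
set rho := fst Q.
have HQ : Q = RC rho by apply Ceq.
set sga := sa * cn a. set sgb := sb * cn (csub Cc a).
set sgc := sc * cn (csub Cc d). set sgd := sd * cn d.
have hnd := cnz_pos Hd. have hna := cnz_pos Ha.
have sgd0 : sgd <> 0 by rewrite /sgd; apply Rmult_integral_contrapositive.
have Hsa : sga = rho * sgd.
  move: Hd2; rewrite cross_conj conj_sub !conjRCm // -/sga -/sgd.
  have -> : cmul (csub (cmul (RC sgd) (cinv d)) (cmul (RC sga) (cinv a))) Cc =
      cadd (cmul (RC sgd) (csub c1 Q)) (cmul (RC (rho * sgd - sga)) (cdiv Cc a)).
    rewrite RC_sub RC_mul -HQ /Q Qf_eq csub0; field; repeat split => //.
  have -> : forall X Y : C, snd (cadd X Y) = snd X + snd Y by [].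
  rewrite !snd_RCmul snd_div_cross // HQ /= => E.
  have : (rho * sgd - sga) * (cross a Cc / cn a) = 0 by lra.
  case/Rmult_integral => E2; first lra.
  exfalso; move: E2; rewrite /Rdiv => /Rmult_integral [] //.
  by apply Rinv_neq_0_compat.
have Hcl' := f_equal cconj Hcl.
rewrite !conj_add !conjRCm // -/sga -/sgb -/sgc -/sgd in Hcl'.
have Hsb : RC sgb = cmul (csub (cadd (cmul (RC sgc) (cinv (csub Cc d))) (cmul (RC sgd) (cinv d)))
                              (cmul (RC sga) (cinv a))) (csub Cc a).
  rewrite -Hcl'; field; repeat split => //.
have E2 : cmul (RC (sgb - sgd)) (csub Cc d) = cmul (RC (sgc - rho * sgd)) (csub Cc a).
  rewrite !RC_sub RC_mul Hsb Hsa RC_mul -HQ /Q Qf_eq csub0; field; repeat split => //.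
have Hx : sgb - sgd = 0.
  have := f_equal (cross (csub Cc a)) E2.
  rewrite !cross_RCr cross_self Rmult_0_r => /Rmult_integral [] //.
have Hy : sgc - rho * sgd = 0.
  case: (Req_dec (sgc - rho * sgd) 0) => // Hy0.
  exfalso; apply nb.
  move: E2; rewrite Hx => E2.
  transitivity (cmul (cinv (RC (sgc - rho * sgd))) (cmul (RC (sgc - rho * sgd)) (csub Cc a))).
    field; exact: RC_nz.
  rewrite -E2; apply Ceq; rewrite /=; field.
  1,2: exact Hy0.
split.
- rewrite -/sga -/sgc; lra.
- rewrite -/sgb -/sgd; lra.
- rewrite -/Q HQ -/sga -/sgd Hsa; congr RC; field; exact sgd0.
Qed.

Lemma cmul_nz x y : x <> c0 -> y <> c0 -> cmul x y <> c0.
Proof.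
move=> Hx Hy E; apply Hy.
transitivity (cmul (cinv x) (cmul x y)); first by field.
rewrite E; apply Ceq; rewrite /=; ring.
Qed.
Lemma cinv_nz x : x <> c0 -> cinv x <> c0.
Proof.
move=> Hx E; have : cmul (cinv x) x = c1 by field.
rewrite E => /(f_equal fst) /=; lra.
Qed.

Lemma half_lemma z w : z <> c0 -> cn (csub z w) = cn (csub c0 w) ->
  fst (cmul w (cinv z)) = / 2.
Proof.
move=> /cnz_pos; rewrite /cn; case: z => z1 z2; case: w => w1 w2 /= Hn E.
field_simplify_eq; [nra | exact Hn].
Qed.

Lemma imag_ratio x y : fst x = 0 -> fst y = 0 -> y <> c0 -> snd (cdiv x y) = 0.
Proof.
case: x => x1 x2; case: y => y1 y2 /= -> -> H; rewrite /=; unfold Rdiv; ring.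
Qed.

Lemma circle_real a Cc d w K :
  a <> c0 -> Cc <> c0 -> d <> c0 -> Cc <> a ->
  cn (csub c0 w) = K -> cn (csub a w) = K -> cn (csub Cc w) = K -> cn (csub d w) = K ->
  snd (Qf a Cc d) = 0.
Proof.
move=> Ha HC Hd Hb H0 H1 H2 H3.
have Hw : w <> c0.
  move=> Ew; move: H0 H1; rewrite Ew => <-.
  rewrite /cn; move: Ha; case: a {Hb} => a1 a2 Ha /= E; apply Ha; apply Ceq; rewrite /=; nra.
have nb := sub_nz Hb. have nb' := sub_nz' nb.
have Hden : csub (cmul w (cinv a)) (cmul w (cinv Cc)) <> c0.
  have -> : csub (cmul w (cinv a)) (cmul w (cinv Cc)) = cmul w (cmul (csub Cc a) (cinv (cmul a Cc))).
    field; split => //.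
  apply cmul_nz => //; apply cmul_nz => //; apply cinv_nz; exact: cmul_nz.
have -> : Qf a Cc d = cdiv (csub (cmul w (cinv d)) (cmul w (cinv Cc))) (csub (cmul w (cinv a)) (cmul w (cinv Cc))).
  rewrite Qf_eq csub0.
  field; repeat split => //.
  move=> E; apply (cmul_nz Hw nb); rewrite -E; ring.
have fs : forall X Y : C, fst (csub X Y) = fst X - fst Y by [].
have ha := half_lemma Ha (etrans H1 (esym H0)).
have hC := half_lemma HC (etrans H2 (esym H0)).
have hd := half_lemma Hd (etrans H3 (esym H0)).
apply imag_ratio => //; rewrite fs; lra.
Qed.


Lemma cross_scal p q x y : cross (cmul (RC p) x) (cmul (RC q) y) = p * q * cross x y.
Proof. rewrite /cross /=; ring. Qed.
Lemma cross_addr x y z : cross x (cadd y z) = cross x y + cross x z.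
Proof. rewrite /cross /=; ring. Qed.
Lemma cross_subr x y z : cross x (csub y z) = cross x y - cross x z.
Proof. rewrite /cross /=; ring. Qed.
Lemma cross_addl x y z : cross (cadd y z) x = cross y x + cross z x.
Proof. rewrite /cross /=; ring. Qed.
Lemma cross_subl x y z : cross (csub y z) x = cross y x - cross z x.
Proof. rewrite /cross /=; ring. Qed.
Lemma cross_anti x y : cross y x = - cross x y.
Proof. rewrite /cross /=; ring. Qed.
Lemma cross0 x : cross x c0 = 0.
Proof. rewrite /cross /=; ring. Qed.
Lemma cross_nz_l x y : cross x y <> 0 -> x <> c0.
Proof. move=> H E; apply H; rewrite E /cross /=; ring. Qed.
Lemma cross_nz_r x y : cross x y <> 0 -> y <> c0.
Proof. move=> H E; apply H; rewrite E /cross /=; ring. Qed.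

Lemma par_coord p1 p2 x1 x2 : p1 * x2 - p2 * x1 = 0 -> p1 * p1 + p2 * p2 <> 0 ->
  x1 = (p1 * x1 + p2 * x2) / (p1 * p1 + p2 * p2) * p1 /\
  x2 = (p1 * x1 + p2 * x2) / (p1 * p1 + p2 * p2) * p2.
Proof.
move=> H n.
have e1 : x1 * (p1 * p1 + p2 * p2) = (p1 * x1 + p2 * x2) * p1.
  have E : x1 * (p1 * p1 + p2 * p2) - (p1 * x1 + p2 * x2) * p1 = - p2 * (p1 * x2 - p2 * x1) by ring.
  rewrite H Rmult_0_r in E; lra.
have e2 : x2 * (p1 * p1 + p2 * p2) = (p1 * x1 + p2 * x2) * p2.
  have E : x2 * (p1 * p1 + p2 * p2) - (p1 * x1 + p2 * x2) * p2 = p1 * (p1 * x2 - p2 * x1) by ring.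
  rewrite H Rmult_0_r in E; lra.
split.
- rewrite /Rdiv Rmult_assoc (Rmult_comm _ p1) -Rmult_assoc -e1; field; exact n.
- rewrite /Rdiv Rmult_assoc (Rmult_comm _ p2) -Rmult_assoc -e2; field; exact n.
Qed.

Lemma par_cross x' x y' y : cross x' x = 0 -> cross y' y = 0 -> x' <> c0 -> y' <> c0 ->
  cross x y <> 0 -> cross x' y' <> 0.
Proof.
case: x' => p1 p2; case: x => x1 x2; case: y' => q1 q2; case: y => y1 y2.
rewrite /cross /= => H1 H2 Hx Hy Hxy Hc; apply Hxy.
have nx : p1 * p1 + p2 * p2 <> 0 by apply (Cnz Hx).
have ny : q1 * q1 + q2 * q2 <> 0 by apply (Cnz Hy).
have [ex1 ex2] := par_coord H1 nx.
have [ey1 ey2] := par_coord H2 ny.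
move: ex1 ex2 ey1 ey2.
set k := (p1 * x1 + p2 * x2) / _. set l := (q1 * y1 + q2 * y2) / _ => ex1 ex2 ey1 ey2.
have -> : x1 * y2 - x2 * y1 = k * l * (p1 * q2 - p2 * q1).
  rewrite {1}ex1 {1}ey2 {1}ex2 {1}ey1; ring.
by rewrite Hc; ring.
Qed.

Lemma wd_eq z r : z <> c0 -> wd z r = cmul (RC (r / cn z)) z.
Proof.
move=> /cnz_pos; rewrite /wd /cn; case: z => z1 z2 /= H.
apply Ceq; rewrite /=; field; contradict H; nra.
Qed.

Lemma dual2D (a Cz dz : C) (pa pb pc pd : R) :
  pa <> 0 -> pb <> 0 -> pc <> 0 -> pd <> 0 ->
  let a' := cmul (RC pa) a in let b' := cmul (RC pb) (csub Cz a) in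
  let c' := cmul (RC pc) (csub Cz dz) in let d' := cmul (RC pd) dz in
  cadd a' b' = cadd c' d' ->
  cross (cadd a' b') (csub dz a) = 0 -> cross (csub d' a') Cz = 0 ->
  cross a Cz <> 0 -> cross a dz <> 0 -> cross Cz dz <> 0 ->
  cross (csub Cz a) (csub dz a) <> 0 -> cross Cz (csub dz a) <> 0 ->
  [/\ cross a' (cadd a' b') <> 0, cross a' d' <> 0, cross (cadd a' b') d' <> 0,
      cross (csub (cadd a' b') a') (csub d' a') <> 0 &
      cross (cadd a' b') (csub d' a') <> 0].
Proof.
move=> ha hb hc hd a' b' c' d' Hcl D1 D2 X1 X2 X3 X4 X5.
have K1 : cross a' (cadd a' b') <> 0.
  rewrite cross_addr cross_self /a' /b' cross_scal cross_subr cross_self.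
  move=> E; apply X1.
  have : pa * pb * (cross a Cz - 0) = 0 by lra.
  case/Rmult_integral => [/Rmult_integral [] //|]; lra.
have K2 : cross a' d' <> 0.
  rewrite /a' /d' cross_scal => /Rmult_integral [/Rmult_integral [] //|] //.
have K3 : cross (cadd a' b') d' <> 0.
  rewrite Hcl cross_addl cross_self /c' /d' cross_scal cross_subl cross_self.
  move=> E; apply X3.
  have : pc * pd * (cross Cz dz - 0) = 0 by lra.
  case/Rmult_integral => [/Rmult_integral [] //|]; lra.
split => //.
- have -> : csub (cadd a' b') a' = b' by apply Ceq; rewrite /=; ring.
  have -> : csub d' a' = csub b' c'.
    apply Ceq; move: (f_equal fst Hcl) (f_equal snd Hcl); rewrite /=; lra.
  rewrite cross_subr cross_self /b' /c' cross_scal.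
  have -> : cross (csub Cz a) (csub Cz dz) = - cross (csub Cz a) (csub dz a).
    rewrite /cross /=; ring.
  move=> E; apply X4.
  have : pb * pc * cross (csub Cz a) (csub dz a) = 0 by lra.
  case/Rmult_integral => [/Rmult_integral [] //|] //.
- apply: (par_cross D1 (y := Cz)) => //.
  + exact: cross_nz_r K1.
  + move=> E; apply K2; have -> : d' = a' by apply Ceq; move: (f_equal fst E) (f_equal snd E); rewrite /=; lra.
    exact: cross_self.
  + by rewrite cross_anti => E; apply X5; lra.
Qed.


Lemma diag2D (a z d : C) : cross z (csub d a) <> 0 ->
  cmul (RC (cross a (csub d a) / cross z (csub d a))) z =
  cadd a (cmul (RC (cross a z / cross z (csub d a))) (csub d a)).
Proof.
rewrite /cross; case: a => a1 a2; case: z => z1 z2; case: d => d1 d2 /= X5.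
apply Ceq; rewrite /=; field; exact X5.
Qed.

Section Q.
Variable N : nat.
Implicit Types A B Cc D X Y Z V P : Vec N.

Lemma vsub_tri X Y A : vsub X Y = vsub (vsub X A) (vsub Y A).
Proof. apply vext => k; rewrite /vsub; ring. Qed.

Lemma noncol_dist X Y Z : ~ collinear X Y Z -> [/\ X <> Y, X <> Z & Y <> Z].
Proof.
move=> H; split => E; apply H; rewrite /collinear ?E.
- exists 1, 0; split; first by left; lra.
  rewrite vsubxx; apply vext => k; rewrite /vadd /vscale /vzero; ring.
- exists 0, 1; split; first by right; lra.
  rewrite vsubxx; apply vext => k; rewrite /vadd /vscale /vzero; ring.
- exists 1, (-1); split; first by left; lra.
  apply vext => k; rewrite /vadd /vscale /vzero; ring.
Qed.

Lemma vscale_eq0 r V : vscale r V = @vzero N -> V <> @vzero N -> r = 0.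
Proof.
move=> E HV; case: (Req_dec r 0) => // Hr; exfalso; apply HV.
apply vext => k; move: (f_equal (fun W => W k) E); rewrite /vscale /vzero => Ek.
case/Rmult_integral: Ek => //.
Qed.

Variables e1 e2 : Vec N.
Hypothesis Ho : ortho e1 e2.

Lemma kap_zero : kap e1 e2 (@vzero N) = c0.
Proof. by rewrite /kap !dot0l. Qed.

Lemma noncol_cross A B Cc : inspan e1 e2 (vsub B A) -> inspan e1 e2 (vsub Cc A) ->
  (~ collinear A B Cc <-> cross (kap e1 e2 (vsub B A)) (kap e1 e2 (vsub Cc A)) <> 0).
Proof.
move=> h1 h2; rewrite /collinear (lin_dep2_cross Ho h1 h2); tauto.
Qed.

Lemma good_of_2D A B Cc D :
  inspan e1 e2 (vsub B A) -> inspan e1 e2 (vsub Cc A) -> inspan e1 e2 (vsub D A) ->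
  let a := kap e1 e2 (vsub B A) in let z := kap e1 e2 (vsub Cc A) in
  let d := kap e1 e2 (vsub D A) in
  cross a z <> 0 -> cross a d <> 0 -> cross z d <> 0 ->
  cross (csub z a) (csub d a) <> 0 -> cross z (csub d a) <> 0 ->
  good_quad A B Cc D.
Proof.
move=> hB hC hD a z d X1 X2 X3 X4 X5.
have hCB : inspan e1 e2 (vsub Cc B) by rewrite (vsub_tri Cc B A); apply inspan_sub.
have hDB : inspan e1 e2 (vsub D B) by rewrite (vsub_tri D B A); apply inspan_sub.
have kCB : kap e1 e2 (vsub Cc B) = csub z a by rewrite (vsub_tri Cc B A) kap_sub.
have kDB : kap e1 e2 (vsub D B) = csub d a by rewrite (vsub_tri D B A) kap_sub.
have N1 : ~ collinear A B Cc by apply/(noncol_cross hB hC).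
have N2 : ~ collinear A B D by apply/(noncol_cross hB hD).
have N3 : ~ collinear A Cc D by apply/(noncol_cross hC hD).
have N4 : ~ collinear B Cc D by apply/(noncol_cross hCB hDB); rewrite kCB kDB.
have [d1 d2 d3] := noncol_dist N1.
have [_ d4 _] := noncol_dist N2.
have [_ d5 _] := noncol_dist N4.
have [_ _ d6] := noncol_dist N3.
split.
-
  exists (cross z d), (cross d a), (cross a z); split.
    right; left; rewrite cross_anti; lra.
  apply: (kap0 Ho) => //.
  + by apply inspan_add; [apply inspan_add|]; apply inspan_scale.
  + rewrite !kap_add !kap_scale -/a -/z -/d.
    rewrite /c0; apply Ceq; rewrite /cross /=; ring.
split; first by split.
split; first by split.
split; first by split.
set s := cross a (csub d a) / cross z (csub d a).
set t := cross a z / cross z (csub d a).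
exists (vadd A (vscale s (vsub Cc A))).
have EP : vadd A (vscale s (vsub Cc A)) = vadd B (vscale t (vsub D B)).
  have : vsub (vadd A (vscale s (vsub Cc A))) A = vsub (vadd B (vscale t (vsub D B))) A.
    apply: (kap_inj Ho) => //.
    + have -> : vsub (vadd A (vscale s (vsub Cc A))) A = vscale s (vsub Cc A)
          by apply vext => k; rewrite /vsub /vadd /vscale; ring.
      by apply inspan_scale.
    + have -> : vsub (vadd B (vscale t (vsub D B))) A = vadd (vsub B A) (vscale t (vsub D B))
          by apply vext => k; rewrite /vsub /vadd /vscale; ring.
      by apply inspan_add => //; apply inspan_scale.
    + have -> : vsub (vadd A (vscale s (vsub Cc A))) A = vscale s (vsub Cc A)
          by apply vext => k; rewrite /vsub /vadd /vscale; ring.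
      have -> : vsub (vadd B (vscale t (vsub D B))) A = vadd (vsub B A) (vscale t (vsub D B))
          by apply vext => k; rewrite /vsub /vadd /vscale; ring.
      rewrite kap_scale kap_add kap_scale kDB -/a -/z.
      exact: diag2D.
  move=> E; apply vext => k; move: (f_equal (fun W => W k) E); rewrite /vsub => Ek; lra.
have Xs : cross z (csub d a) <> 0 := X5.
split; [by exists s | split; [by rewrite EP; exists t |]].
have sv : forall r V W, W = vadd V (vscale r (vsub W V)) -> V <> W -> r = 1.
  move=> r V W E HVW.
  have : vscale (r - 1) (vsub W V) = @vzero N.
    apply vext => k; move: (f_equal (fun U => U k) E); rewrite /vadd /vscale /vsub /vzero => Ek; lra.
  move/vscale_eq0 => H; have : r - 1 = 0.
    apply H => E'; apply HVW; apply vext => k.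
    move: (f_equal (fun U => U k) E'); rewrite /vsub /vzero => Ek; lra.
  lra.
have s0 : forall r V W, V = vadd V (vscale r (vsub W V)) -> V <> W -> r = 0.
  move=> r V W E HVW.
  have : vscale r (vsub W V) = @vzero N.
    apply vext => k; move: (f_equal (fun U => U k) E); rewrite /vadd /vscale /vsub /vzero => Ek; lra.
  move/vscale_eq0; apply => E'; apply HVW; apply vext => k.
  move: (f_equal (fun U => U k) E'); rewrite /vsub /vzero => Ek; lra.
split.
- move=> E; have := s0 _ _ _ (esym E) d2; rewrite /s /Rdiv => /Rmult_integral [].
  + rewrite cross_subr cross_self => H; apply X2; lra.
  + by apply Rinv_neq_0_compat.
- rewrite EP => E; have := s0 _ _ _ (esym E) d5; rewrite /t /Rdiv => /Rmult_integral [] //.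
  by apply Rinv_neq_0_compat.
- move=> E; have := sv _ _ _ (esym E) d2 => Hs.
  apply X4; move: Hs; rewrite /s => Hs.
  have : cross a (csub d a) = cross z (csub d a) by field_simplify_eq in Hs.
  rewrite /cross /=; lra.
- rewrite EP => E; have := sv _ _ _ (esym E) d5 => Ht.
  apply X3; move: Ht; rewrite /t => Ht.
  have : cross a z = cross z (csub d a) by field_simplify_eq in Ht.
  rewrite /cross /=; lra.
Qed.
End Q.

Section QF.
Variable N : nat.
Implicit Types A B Cc D X Y Z V P : Vec N.

Lemma quad_frame A B Cc D : good_quad A B Cc D ->
  let e1 := fe1 A B in let e2 := fe2 A B D in
  [/\ ortho e1 e2, inspan e1 e2 (vsub B A), inspan e1 e2 (vsub Cc A), inspan e1 e2 (vsub D A) &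
   let a := kap e1 e2 (vsub B A) in let z := kap e1 e2 (vsub Cc A) in
   let d := kap e1 e2 (vsub D A) in
   [/\ cross a z <> 0, cross a d <> 0, cross z d <> 0,
       cross (csub z a) (csub d a) <> 0 & cross z (csub d a) <> 0]].
Proof.
case=> Hpl [_ [_ [[N1 N2 N3 N4] [P [[s HPs] [[t HPt] _]]]]]] e1 e2.
have [Ho hB hD] := frame N2.
have hC : inspan e1 e2 (vsub Cc A).
  case: Hpl => l1 [l2 [l3 [Hl E]]].
  case: (Req_dec l2 0) => Hl2.
  - exfalso; apply N2; exists l1, l3; split.
      by case: Hl => [?|[?|?]]; [left|lra|right].
    rewrite -E Hl2; apply vext => k; rewrite /vadd /vscale; ring.
  - exists (- (l1 * fst (kap e1 e2 (vsub B A)) + l3 * fst (kap e1 e2 (vsub D A))) / l2),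
      (- (l1 * snd (kap e1 e2 (vsub B A)) + l3 * snd (kap e1 e2 (vsub D A))) / l2).
    have eB := inspan_kap Ho hB. have eD := inspan_kap Ho hD.
    apply vext => k; move: (f_equal (fun W => W k) E) (f_equal (fun W => W k) eB)
       (f_equal (fun W => W k) eD).
    rewrite /vadd /vscale /vzero => Ek eBk eDk.
    rewrite eBk eDk in Ek.
    field_simplify_eq; last exact Hl2.
    set x1 := fst _; set y1 := snd _; set x2 := fst _; set y2 := snd _.
    rewrite -/x1 -/y1 -/x2 -/y2 in Ek.
    have : l2 * vsub Cc A k = - (l1 * (x1 * e1 k + y1 * e2 k) + l3 * (x2 * e1 k + y2 * e2 k)).
      rewrite -/e1 -/e2 in Ek; lra.
    move=> H; rewrite Rmult_comm H; ring.
split => //.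
move=> a z d.
have hCB : inspan e1 e2 (vsub Cc B) by rewrite (vsub_tri Cc B A); apply inspan_sub.
have hDB : inspan e1 e2 (vsub D B) by rewrite (vsub_tri D B A); apply inspan_sub.
have kCB : kap e1 e2 (vsub Cc B) = csub z a by rewrite (vsub_tri Cc B A) kap_sub.
have kDB : kap e1 e2 (vsub D B) = csub d a by rewrite (vsub_tri D B A) kap_sub.
have X1 : cross a z <> 0 by apply/(noncol_cross Ho hB hC).
have X2 : cross a d <> 0 by apply/(noncol_cross Ho hB hD).
have X3 : cross z d <> 0 by apply/(noncol_cross Ho hC hD).
have X4 : cross (csub z a) (csub d a) <> 0.
  by rewrite -kCB -kDB; apply/(noncol_cross Ho hCB hDB).
split => //.
move=> X5.
have E : vscale s (vsub Cc A) = vadd (vsub B A) (vscale t (vsub D B)).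
  apply vext => k; move: (f_equal (fun W => W k) HPs) (f_equal (fun W => W k) HPt).
  rewrite /vadd /vscale /vsub => e1k e2k; lra.
have := f_equal (kap e1 e2) E.
rewrite kap_scale kap_add kap_scale kDB -/a -/z => Ek.
apply X1.
have := f_equal (cross z) Ek.
rewrite cross_addr !cross_RCr cross_self X5.
rewrite cross_anti; lra.
Qed.
End QF.


Section QB.
Variable N : nat.
Implicit Types A B Cc D X Y Z V P : Vec N.

Definition omega X Y (r : R) : Vec N := vscale (r / dot (vsub Y X) (vsub Y X)) (vsub Y X).

Lemma par_scal r V : lin_dep2 (vscale r V) V.
Proof.
exists 1, (- r); split; first by left; lra.
apply vext => k; rewrite /vadd /vscale /vzero; ring.
Qed.

Lemma kap_omega e1 e2 X Y r : ortho e1 e2 -> inspan e1 e2 (vsub Y X) -> kap e1 e2 (vsub Y X) <> c0 ->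
  kap e1 e2 (omega X Y r) = wd (kap e1 e2 (vsub Y X)) r.
Proof.
move=> Ho h hn; rewrite /omega kap_scale (dot_kap Ho h h) wd_eq //.
Qed.

Lemma Qf_nz a z d : a <> c0 -> z <> a -> d <> c0 -> z <> d -> Qf a z d <> c0.
Proof.
move=> ha hb hd hc; rewrite Qf_eq csub0.
apply cmul_nz; last exact: cinv_nz.
apply cmul_nz; last exact: sub_nz.
apply cmul_nz; last by apply cinv_nz; apply sub_nz => E; apply hb.
move=> E; apply ha; apply Ceq; move: (f_equal fst E) (f_equal snd E); rewrite /=; lra.
Qed.

Lemma quad_back A B Cc D ai aj : good_quad A B Cc D -> cross_ratio A B Cc D = (ai / aj, 0) ->
  vadd (omega A B ai) (omega B Cc aj) = vadd (omega A D aj) (omega D Cc ai) /\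
  forall A' B' C' D', B' = vadd A' (omega A B ai) -> C' = vadd B' (omega B Cc aj) ->
    D' = vadd A' (omega A D aj) ->
    good_quad A' B' C' D' /\ dual_quads A B Cc D A' B' C' D'.
Proof.
move=> Hg Hq.
have [Ho hB hC hD] := quad_frame Hg.
set e1 := fe1 A B; set e2 := fe2 A B D.
move=> [] X1 X2 X3 X4 X5.
move: Hq X1 X2 X3 X4 X5.
rewrite cross_ratio_Qf -/e1 -/e2.
set a := kap e1 e2 (vsub B A); set z := kap e1 e2 (vsub Cc A); set d := kap e1 e2 (vsub D A).
move=> HQ X1 X2 X3 X4 X5.
have ha : a <> c0 := cross_nz_l X1.
have hd : d <> c0 := cross_nz_r X2.
have hza : z <> a by move=> E; apply X4; rewrite E /cross /=; ring.
have hzd : z <> d by move=> E; apply X3; rewrite E cross_self.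
have hQ := Qf_nz ha hza hd hzd.
have haj : aj <> 0.
  move=> E; apply hQ; rewrite HQ E /Rdiv Rinv_0 Rmult_0_r; by [].
have hai : ai <> 0.
  move=> E; apply hQ; rewrite HQ E /Rdiv Rmult_0_l; by [].
have hCB : inspan e1 e2 (vsub Cc B) by rewrite (vsub_tri Cc B A); apply inspan_sub.
have hDB : inspan e1 e2 (vsub D B) by rewrite (vsub_tri D B A); apply inspan_sub.
have hCD : inspan e1 e2 (vsub Cc D) by rewrite (vsub_tri Cc D A); apply inspan_sub.
have kCB : kap e1 e2 (vsub Cc B) = csub z a by rewrite (vsub_tri Cc B A) kap_sub.
have kDB : kap e1 e2 (vsub D B) = csub d a by rewrite (vsub_tri D B A) kap_sub.
have kCD : kap e1 e2 (vsub Cc D) = csub z d by rewrite (vsub_tri Cc D A) kap_sub.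
have nza : csub z a <> c0 := sub_nz hza.
have nzd : csub z d <> c0 := sub_nz hzd.
have k1 : kap e1 e2 (omega A B ai) = wd a ai by rewrite kap_omega.
have k2 : kap e1 e2 (omega B Cc aj) = wd (csub z a) aj by rewrite kap_omega // kCB.
have k3 : kap e1 e2 (omega D Cc ai) = wd (csub z d) ai by rewrite kap_omega // kCD.
have k4 : kap e1 e2 (omega A D aj) = wd d aj by rewrite kap_omega.
have i1 : inspan e1 e2 (omega A B ai) by apply inspan_scale.
have i2 : inspan e1 e2 (omega B Cc aj) by apply inspan_scale.
have i3 : inspan e1 e2 (omega D Cc ai) by apply inspan_scale.
have i4 : inspan e1 e2 (omega A D aj) by apply inspan_scale.
have [cl D1 D2] := core_back ha hza hd hzd haj HQ.
have Hcl : vadd (omega A B ai) (omega B Cc aj) = vadd (omega A D aj) (omega D Cc ai).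
  apply: (kap_inj Ho); try by apply inspan_add.
  rewrite !kap_add k1 k2 k3 k4 cl; apply Ceq; rewrite /=; ring.
split => // A' B' C' D' EB EC ED.
have eBA : vsub B' A' = omega A B ai by rewrite EB; apply vext => k; rewrite /vsub /vadd; ring.
have eCB : vsub C' B' = omega B Cc aj by rewrite EC; apply vext => k; rewrite /vsub /vadd; ring.
have eCA : vsub C' A' = vadd (omega A B ai) (omega B Cc aj).
  by rewrite EC EB; apply vext => k; rewrite /vsub /vadd; ring.
have eDA : vsub D' A' = omega A D aj by rewrite ED; apply vext => k; rewrite /vsub /vadd; ring.
have eDC : vsub D' C' = vscale (ai / dot (vsub Cc D) (vsub Cc D)) (vsub D Cc).
  rewrite ED EC EB; apply vext => k.
  have h : omega D Cc ai k = - vscale (ai / dot (vsub Cc D) (vsub Cc D)) (vsub D Cc) k.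
    rewrite /omega /vscale /vsub; ring.
  move: (f_equal (fun W => W k) Hcl) h => Hk h.
  transitivity (vadd A' (omega A D aj) k - vadd (vadd A' (omega A B ai)) (omega B Cc aj) k); first by [].
  rewrite /vadd in Hk *; lra.
have eAD : vsub A' D' = vscale (aj / dot (vsub D A) (vsub D A)) (vsub A D).
  rewrite ED; apply vext => k.
  transitivity (A' k - vadd A' (omega A D aj) k); first by [].
  rewrite /vadd /omega /vscale /vsub; ring.
have eDB : vsub D' B' = vsub (omega A D aj) (omega A B ai).
  by rewrite ED EB; apply vext => k; rewrite /vsub /vadd; ring.
split.
-
  have iCA : inspan e1 e2 (vsub C' A') by rewrite eCA; apply inspan_add.
  have iBA : inspan e1 e2 (vsub B' A') by rewrite eBA.
  have iDA : inspan e1 e2 (vsub D' A') by rewrite eDA.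
  have pa : ai / cn a <> 0 by apply: Rmult_integral_contrapositive; split => //; apply Rinv_neq_0_compat; apply cnz_pos.
  have pb : aj / cn (csub z a) <> 0 by apply: Rmult_integral_contrapositive; split => //; apply Rinv_neq_0_compat; apply cnz_pos.
  have pc : ai / cn (csub z d) <> 0 by apply: Rmult_integral_contrapositive; split => //; apply Rinv_neq_0_compat; apply cnz_pos.
  have pd : aj / cn d <> 0 by apply: Rmult_integral_contrapositive; split => //; apply Rinv_neq_0_compat; apply cnz_pos.
  have cl' := cl; have D1' := D1; have D2' := D2.
  rewrite !wd_eq // in cl' D1' D2'.
  have [Y1 Y2 Y3 Y4 Y5] := dual2D pa pb pc pd cl' D1' D2' X1 X2 X3 X4 X5.
  apply: (good_of_2D Ho iBA iCA iDA); rewrite -/e1 -/e2 ?eBA ?eCA ?eDA ?kap_add ?k1 ?k2 ?k4 !wd_eq //.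
- split; first split.
  + rewrite eBA; exact: par_scal.
  + rewrite eCB; exact: par_scal.
  + rewrite eDC; exact: par_scal.
  + rewrite eAD; exact: par_scal.
  split.
  + rewrite eCA; apply/(lin_dep2_cross Ho _ hDB); first by apply inspan_add.
    by rewrite kap_add k1 k2 kDB.
  + rewrite eDB; apply/(lin_dep2_cross Ho _ hC); first by apply inspan_sub.
    by rewrite kap_sub k4 k1.
Qed.
End QB.


Section QFw.
Variable N : nat.
Implicit Types A B Cc D X Y Z V P : Vec N.

Lemma vsub_nz X Y : X <> Y -> vsub X Y <> @vzero N.
Proof.
move=> H E; apply H; apply vext => k; move: (f_equal (fun W => W k) E).
rewrite /vsub /vzero; lra.
Qed.

Lemma par_ex X Y : parallel X Y -> Y <> @vzero N -> exists s, X = vscale s Y.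
Proof.
case=> l1 [l2 [Hl E]] HY.
case: (Req_dec l1 0) => Hl1.
- exfalso; apply HY; apply vext => k; move: (f_equal (fun W => W k) E).
  rewrite /vadd /vscale /vzero Hl1 => Ek.
  have Hl2 : l2 <> 0 by case: Hl.
  have : l2 * Y k = 0 by lra.
  case/Rmult_integral => //.
- exists (- l2 / l1); apply vext => k; move: (f_equal (fun W => W k) E).
  rewrite /vadd /vscale /vzero => Ek.
  field_simplify_eq => //; lra.
Qed.

Lemma dot_sub_sq (x y : Vec N) : dot (vsub x y) (vsub x y) = dot x x - 2 * dot x y + dot y y.
Proof. rewrite !dot_subl !dot_subr (dotC y x); ring. Qed.

Lemma circ_dist e1 e2 Y n : ortho e1 e2 -> inspan e1 e2 Y ->
  dot (vsub Y n) (vsub Y n) =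
  cn (csub (kap e1 e2 Y) (kap e1 e2 n)) +
  dot (vsub n (vadd (vscale (fst (kap e1 e2 n)) e1) (vscale (snd (kap e1 e2 n)) e2)))
      (vsub n (vadd (vscale (fst (kap e1 e2 n)) e1) (vscale (snd (kap e1 e2 n)) e2))).
Proof.
move=> Ho hY.
have EY := inspan_kap Ho hY.
set y1 := fst (kap e1 e2 Y) in EY *; set y2 := snd (kap e1 e2 Y) in EY *.
set w1 := fst (kap e1 e2 n); set w2 := snd (kap e1 e2 n).
set m := vsub n _.
case: (Ho) => h11 h22 h12.
have me1 : dot m e1 = 0.
  rewrite /m dot_subl dot_addl !dot_scalel h11 (dotC e2 e1) h12 /w1 /kap /=; ring.
have me2 : dot m e2 = 0.
  rewrite /m dot_subl dot_addl !dot_scalel h22 h12 /w2 /kap /=; ring.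
set U := vadd (vscale (y1 - w1) e1) (vscale (y2 - w2) e2).
have EU : vsub Y n = vsub U m.
  apply vext => k; move: (f_equal (fun W => W k) EY).
  rewrite /U /m /vsub /vadd /vscale => ->; ring.
have hU : inspan e1 e2 U by exists (y1 - w1), (y2 - w2).
have Um : dot U m = 0 by rewrite /U dot_addl !dot_scalel (dotC e1 m) (dotC e2 m) me1 me2; ring.
rewrite EU dot_sub_sq Um (dot_kap Ho hU hU) /U kap_comb //.
rewrite /cn /csub /= /y1 /y2 /m /kap /=; rewrite (_ : w1 = dot n e1) // (_ : w2 = dot n e2) //; ring.
Qed.

Lemma quad_fwd A B Cc D A' B' C' D' :
  good_quad A B Cc D -> concircular A B Cc D -> good_quad A' B' C' D' ->
  dual_quads A B Cc D A' B' C' D' ->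
  [/\ dot (vsub B' A') (vsub B A) = dot (vsub C' D') (vsub Cc D),
      dot (vsub C' B') (vsub Cc B) = dot (vsub D' A') (vsub D A) &
      cross_ratio A B Cc D = (dot (vsub B' A') (vsub B A) / dot (vsub D' A') (vsub D A), 0)].
Proof.
move=> Hg Hcirc Hg' [[p1 p2 p3 p4] [p5 p6]].
have [Ho hB hC hD] := quad_frame Hg.
set e1 := fe1 A B; set e2 := fe2 A B D.
move=> [] X1 X2 X3 X4 X5.
rewrite cross_ratio_Qf -/e1 -/e2.
move: X1 X2 X3 X4 X5.
set a := kap e1 e2 (vsub B A); set z := kap e1 e2 (vsub Cc A); set d := kap e1 e2 (vsub D A).
move=> X1 X2 X3 X4 X5.
have ha : a <> c0 := cross_nz_l X1.
have hd : d <> c0 := cross_nz_r X2.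
have hz : z <> c0 := cross_nz_r X1.
have hza : z <> a by move=> E; apply X4; rewrite E /cross /=; ring.
have hzd : z <> d by move=> E; apply X3; rewrite E cross_self.
have hCB : inspan e1 e2 (vsub Cc B) by rewrite (vsub_tri Cc B A); apply inspan_sub.
have hCD : inspan e1 e2 (vsub Cc D) by rewrite (vsub_tri Cc D A); apply inspan_sub.
have kCB : kap e1 e2 (vsub Cc B) = csub z a by rewrite (vsub_tri Cc B A) kap_sub.
have kCD : kap e1 e2 (vsub Cc D) = csub z d by rewrite (vsub_tri Cc D A) kap_sub.
case: Hg => _ [[dAB dAC dAD dBC] [[dBD dCD] _]].
case: Hg' => _ [[dAB' dAC' dAD' dBC'] [[dBD' dCD'] _]].
have [sa Ea] := par_ex p1 (vsub_nz (nesym dAB)).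
have [sb Eb] := par_ex p2 (vsub_nz (nesym dBC)).
have [sc' Ec'] := par_ex p3 (vsub_nz (nesym dCD)).
have [sd' Ed'] := par_ex p4 (vsub_nz dAD).
have Ec : vsub C' D' = vscale sc' (vsub Cc D).
  apply vext => k; move: (f_equal (fun W => W k) Ec'); rewrite /vsub /vscale => Ek.
  have : D' k - C' k = sc' * (D k - Cc k) by exact Ek.
  lra.
have Ed : vsub D' A' = vscale sd' (vsub D A).
  apply vext => k; move: (f_equal (fun W => W k) Ed'); rewrite /vsub /vscale => Ek.
  have : A' k - D' k = sd' * (A k - D k) by exact Ek.
  lra.
have hsd : sd' <> 0.
  move=> E; apply dAD'; apply vext => k; move: (f_equal (fun W => W k) Ed).
  rewrite /vsub /vscale E; lra.
have Ecl : vadd (vscale sa (vsub B A)) (vscale sb (vsub Cc B)) =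
           vadd (vscale sc' (vsub Cc D)) (vscale sd' (vsub D A)).
  rewrite -Ea -Eb -Ec -Ed; apply vext => k; rewrite /vadd /vsub; ring.
have Kcl := f_equal (kap e1 e2) Ecl.
rewrite !kap_add !kap_scale kCB kCD -/a -/d in Kcl.
have ED2 : vsub D' B' = vsub (vscale sd' (vsub D A)) (vscale sa (vsub B A)).
  rewrite -Ed -Ea; apply vext => k; rewrite /vsub; ring.
have Kd2 : cross (csub (cmul (RC sd') d) (cmul (RC sa) a)) z = 0.
  move: p6; rewrite ED2 => /(lin_dep2_cross Ho _ hC).
  rewrite kap_sub !kap_scale; apply.
  by apply inspan_sub; apply inspan_scale.
have Hre : snd (Qf a z d) = 0.
  case: Hcirc => c0' [E1 [E2 [rho [_ [[_ HA] [_ HB] [_ HC] [_ HD]]]]]].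
  set n := vsub c0' A.
  have hA0 : inspan e1 e2 (vsub A A) by rewrite vsubxx; exists 0, 0; apply vext => k; rewrite /vadd /vscale /vzero; ring.
  have cd : forall X, inspan e1 e2 (vsub X A) -> dot (vsub X c0') (vsub X c0') =
      cn (csub (kap e1 e2 (vsub X A)) (kap e1 e2 n)) + _ := fun X h => etrans (f_equal (fun W => dot W W) (vsub_tri X c0' A)) (circ_dist n Ho h).
  move: (cd A hA0) (cd B hB) (cd Cc hC) (cd D hD); rewrite HA HB HC HD vsubxx kap_zero -/a -/z -/d.
  set M := dot _ _ => EA EB EC ED.
  apply: (circle_real (w := kap e1 e2 n) (K := rho * rho - M)) => //; lra.
have X4' : cross (csub z a) (csub z d) <> 0.
  have -> : cross (csub z a) (csub z d) = - cross (csub z a) (csub d a) by rewrite /cross /=; ring.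
  lra.
have [R1 R2 R3] := core_fwd ha hza hd hzd Kcl Kd2 Hre X1 X4' hsd.
have dB : dot (vsub B' A') (vsub B A) = sa * cn a by rewrite Ea dot_scalel (dot_kap Ho hB hB).
have dC : dot (vsub C' D') (vsub Cc D) = sc' * cn (csub z d) by rewrite Ec dot_scalel (dot_kap Ho hCD hCD) kCD.
have dCB : dot (vsub C' B') (vsub Cc B) = sb * cn (csub z a) by rewrite Eb dot_scalel (dot_kap Ho hCB hCB) kCB.
have dD : dot (vsub D' A') (vsub D A) = sd' * cn d by rewrite Ed dot_scalel (dot_kap Ho hD hD).
by rewrite dB dC dCB dD.
Qed.
End QFw.


Fixpoint sumN (h : Z -> R) (k : nat) : R :=
  match k with O => 0 | S k' => sumN h k' + h (Z.of_nat k') end.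
Fixpoint sumM (h : Z -> R) (k : nat) : R :=
  match k with O => 0 | S k' => sumM h k' + h (- Z.of_nat k' - 1)%Z end.
Definition sumZ (h : Z -> R) (n : Z) : R :=
  if (0 <=? n)%Z then sumN h (Z.to_nat n) else - sumM h (Z.to_nat (- n)).

Lemma sumZ0 h : sumZ h 0 = 0.
Proof. by []. Qed.

Lemma sumZ_step h n : sumZ h (n + 1) = sumZ h n + h n.
Proof.
rewrite /sumZ.
case: (Z.leb_spec 0 n) => Hn.
- have -> : (0 <=? n + 1)%Z = true by apply Z.leb_le; lia.
  rewrite (_ : Z.to_nat (n + 1) = S (Z.to_nat n)); last by lia.
  rewrite /= Z2Nat.id //.
- case: (Z.leb_spec 0 (n + 1)) => Hn1.
  + have -> : n = (-1)%Z by lia.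
    rewrite /=; ring.
  + rewrite (_ : Z.to_nat (- n) = S (Z.to_nat (- (n + 1)))); last by lia.
    rewrite /= Z2Nat.id; last by lia.
    have -> : (- (- (n + 1)) - 1)%Z = n by lia.
    ring.
Qed.

Lemma sumZ_ext h1 h2 n : (forall t, h1 t = h2 t) -> sumZ h1 n = sumZ h2 n.
Proof.
move=> H; have -> // : h1 = h2; exact: functional_extensionality.
Qed.

Lemma Zind2 (P : Z -> Prop) : P 0%Z -> (forall n, P n <-> P (n + 1)%Z) -> forall n, P n.
Proof.
move=> H0 HS n; apply (Z.peano_ind P) => //.
- by move=> k /HS; rewrite Z.add_1_r.
- move=> k Hk; apply/(HS (Z.pred k)); by rewrite Z.add_1_r Z.succ_pred.
Qed.

Lemma sumZ_tele (g H : Z -> R) : (forall t, g t = H (t + 1)%Z - H t) ->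
  forall n, sumZ g n = H n - H 0%Z.
Proof.
move=> Hg; apply Zind2; first by rewrite sumZ0; ring.
move=> n; rewrite sumZ_step Hg; split => E; lra.
Qed.

Lemma sumZ_add (g1 g2 : Z -> R) n : sumZ (fun t => g1 t + g2 t) n = sumZ g1 n + sumZ g2 n.
Proof.
move: n; apply Zind2; first by rewrite !sumZ0; ring.
move=> n; rewrite !sumZ_step; split => E; lra.
Qed.

Section Pot.
Variable m : nat.
Definition upd (u : 'I_m -> Z) (k : 'I_m) (t : Z) : 'I_m -> Z :=
  fun l => if l == k then t else u l.

Variable g : 'I_m -> ('I_m -> Z) -> R.
Hypothesis Hcl : forall u i j, i <> j ->
  g i u + g j (lshift_e u i) = g j u + g i (lshift_e u j).

Fixpoint Phi (k : nat) (u : 'I_m -> Z) : R :=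
  match k with
  | O => 0
  | S k' => match insub k' with
            | Some kk => Phi k' (upd u kk 0) + sumZ (fun t => g kk (upd u kk t)) (u kk)
            | None => Phi k' u
            end
  end.

Lemma upd_shift_same (u : 'I_m -> Z) k t : upd (lshift_e u k) k t = upd u k t.
Proof.
apply functional_extensionality => l; rewrite /upd /lshift_e; by case: (l == k).
Qed.
Lemma upd_shift_diff (u : 'I_m -> Z) i k t : i <> k -> upd (lshift_e u i) k t = lshift_e (upd u k t) i.
Proof.
move=> Hik; apply functional_extensionality => l; rewrite /upd /lshift_e.
case: (eqVneq l k) => [->|Hlk].
- case: (eqVneq k i) => // E; by rewrite E in Hik.
- by [].
Qed.
Lemma upd_self (u : 'I_m -> Z) k : upd u k (u k) = u.
Proof.
apply functional_extensionality => l; rewrite /upd; by case: (eqVneq l k) => [->|].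
Qed.
Lemma upd_succ (u : 'I_m -> Z) k t : upd u k (t + 1)%Z = lshift_e (upd u k t) k.
Proof.
apply functional_extensionality => l; rewrite /upd /lshift_e; by case: (eqVneq l k).
Qed.
Lemma lshift_diff (u : 'I_m -> Z) (i k : 'I_m) : i <> k -> lshift_e u i k = u k.
Proof.
move=> H; rewrite /lshift_e; case: (eqVneq k i) => // E; by rewrite E in H.
Qed.
Lemma lshift_same (u : 'I_m -> Z) (k : 'I_m) : lshift_e u k k = (u k + 1)%Z.
Proof. by rewrite /lshift_e eqxx. Qed.

Lemma Phi_pot k : forall u (i : 'I_m), (val i < k)%N -> Phi k (lshift_e u i) = Phi k u + g i u.
Proof.
elim: k => [|k IH] u i Hi; first by [].
rewrite /=.
case: insubP => [kk Hk Ek|Hk].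
- case: (eqVneq i kk) => [Eik|Nik].
  + rewrite Eik upd_shift_same lshift_same sumZ_step.
    rewrite (_ : (fun t => g kk (upd (lshift_e u kk) kk t)) = (fun t => g kk (upd u kk t))); last first.
      by apply functional_extensionality => t; rewrite upd_shift_same.
    rewrite upd_shift_same upd_self; ring.
  + have Nik' : i <> kk by apply/eqP.
    have Hik : (val i < k)%N.
      move: Hi; rewrite ltnS leq_eqVlt => /orP [/eqP E|//].
      exfalso; apply Nik'; apply val_inj; by rewrite /= Ek.
    rewrite upd_shift_diff // IH // lshift_diff //.
    rewrite (sumZ_ext (h2 := fun t => g kk (upd u kk t) +
                 (g i (upd u kk (t + 1)%Z) - g i (upd u kk t)))); last first.
      move=> t; rewrite upd_shift_diff // upd_succ.
      have := Hcl (upd u kk t) Nik'; lra.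
    rewrite sumZ_add (@sumZ_tele (fun t => g i (upd u kk (t + 1)%Z) - g i (upd u kk t)) (fun t => g i (upd u kk t))) // upd_self.
    ring.
- have Hik : (val i < k)%N.
    move: Hi; rewrite ltnS leq_eqVlt => /orP [/eqP E|//].
    exfalso; move: Hk; rewrite -E; by rewrite ltn_ord.
  by rewrite IH.
Qed.
End Pot.

Lemma potential (m N : nat) (om : 'I_m -> ('I_m -> Z) -> Vec N) :
  (forall u i j, i <> j ->
     vadd (om i u) (om j (lshift_e u i)) = vadd (om j u) (om i (lshift_e u j))) ->
  exists F : ('I_m -> Z) -> Vec N, forall u i, F (lshift_e u i) = vadd (F u) (om i u).
Proof.
move=> Hcl.
exists (fun u c => Phi (fun i v => om i v c) m u).
move=> u i; apply functional_extensionality => c.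
rewrite /vadd Phi_pot //.
  move=> v i' j' H; have := f_equal (fun W => W c) (Hcl v i' j' H); by rewrite /vadd.
exact: ltn_ord.
Qed.


Section Lab.
Variable m : nat.
Variable L : 'I_m -> ('I_m -> Z) -> R.
Hypothesis HL : forall u i j, i <> j -> L i (lshift_e u j) = L i u.

Lemma L_upd u i j t : i <> j -> L i (upd u j t) = L i u.
Proof.
move=> Hij.
have : forall t, L i (upd u j t) = L i (upd u j 0).
  refine (@Zind2 (fun t => L i (upd u j t) = L i (upd u j 0)) _ _) => [//|n /=]; rewrite upd_succ HL //.
move=> H; rewrite H -(H (u j)) upd_self //.
Qed.

Lemma L_uniform u i : L i u = L i (upd (fun _ => 0%Z) i (u i)).
Proof.
set v := upd (fun _ => 0%Z) i (u i).
have step : forall k, L i (fun l => if (val l < k)%N then v l else u l) = L i u.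
  elim=> [|k IH].
  - by rewrite (_ : (fun l : 'I_m => if (val l < 0)%N then v l else u l) = u) //;
       apply functional_extensionality.
  - case: (ltnP k m) => Hk.
    + set kk := Ordinal Hk.
      have -> : (fun l : 'I_m => if (val l < k.+1)%N then v l else u l) =
                upd (fun l => if (val l < k)%N then v l else u l) kk (v kk).
        apply functional_extensionality => l; rewrite /upd.
        case: (eqVneq l kk) => [->|Hl]; first by rewrite /= ltnSn.
        rewrite ltnS leq_eqVlt.
        have -> : (val l == k) = false.
          apply/negP => /eqP E; apply/negP: Hl; rewrite negbK; apply/eqP; apply val_inj; by rewrite /= E.
        by [].
      case: (eqVneq kk i) => [Ei|Ni].
      * rewrite -IH; congr (L i); apply functional_extensionality => l; rewrite /upd.
        case: (eqVneq l kk) => [->|] //.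
        by rewrite /= ltnn /v /upd Ei eqxx.
      * rewrite L_upd //; apply/eqP; by rewrite eq_sym.
    + rewrite -IH; congr (L i); apply functional_extensionality => l.
      have h1 : (val l < k.+1)%N by apply: (leq_trans (ltn_ord l)); apply: (leq_trans Hk).
      have h2 : (val l < k)%N by apply: (leq_trans (ltn_ord l)).
      by rewrite h1 h2.
have := step m.
rewrite (_ : (fun l : 'I_m => if (val l < m)%N then v l else u l) = v) //.
apply functional_extensionality => l; by rewrite ltn_ord.
Qed.
End Lab.


Lemma lshift_comm m (u : 'I_m -> Z) i j : lshift_e (lshift_e u i) j = lshift_e (lshift_e u j) i.
Proof.
apply functional_extensionality => l; rewrite /lshift_e.
by case: (l == i); case: (l == j).
Qed.

Unset Implicit Arguments.
Theorem mainTheorem14 (m N : nat) (f : ('I_m -> Z) -> Vec N)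
  (Hf : circular_net f) :
  isothermic f <->
  exists alpha : 'I_m -> Z -> R,
    forall (u : 'I_m -> Z) (i j : 'I_m), i <> j ->
      cross_ratio (f u) (f (lshift_e u i)) (f (lshift_e (lshift_e u i) j)) (f (lshift_e u j))
      = (alpha i (u i) / alpha j (u j), 0).
Proof.
case: (Hf) => Hq Hc.
split.
- case=> _ [fs [Hqs Hdual]].
  set L := fun i u => dot (vsub (fs (lshift_e u i)) (fs u)) (vsub (f (lshift_e u i)) (f u)).
  have HQ : forall u i j, i <> j ->
     [/\ L i u = L i (lshift_e u j), L j (lshift_e u i) = L j u &
       cross_ratio (f u) (f (lshift_e u i)) (f (lshift_e (lshift_e u i) j)) (f (lshift_e u j))
       = (L i u / L j u, 0)].
    move=> u i j Hij.
    have [R1 R2 R3] := quad_fwd (Hq u i j Hij) (Hc u i j Hij) (Hqs u i j Hij) (Hdual u i j Hij).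
    split => //.
    by rewrite /L R1 lshift_comm.
  have HL : forall u i j, i <> j -> L i (lshift_e u j) = L i u.
    by move=> u i j Hij; case: (HQ u i j Hij).
  exists (fun i z => L i (upd (fun _ => 0%Z) i z)).
  move=> u i j Hij; case: (HQ u i j Hij) => _ _ ->.
  by rewrite -!L_uniform.
- case=> alpha Halpha.
  split => //.
  set om := fun i u => omega (f u) (f (lshift_e u i)) (alpha i (u i)).
  have HB : forall u i j, i <> j ->
    vadd (om i u) (om j (lshift_e u i)) = vadd (om j u) (om i (lshift_e u j)) /\
    forall A' B' C' D', B' = vadd A' (om i u) -> C' = vadd B' (om j (lshift_e u i)) ->
      D' = vadd A' (om j u) ->
      good_quad A' B' C' D' /\
      dual_quads (f u) (f (lshift_e u i)) (f (lshift_e (lshift_e u i) j)) (f (lshift_e u j)) A' B' C' D'.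
    move=> u i j Hij.
    have [H1 H2] := quad_back (Hq u i j Hij) (Halpha u i j Hij).
    have Nji : j <> i by apply nesym.
    rewrite /om lshift_diff // (lshift_diff u Nji) (lshift_comm u j i).
    by split.
  have [F HF] := potential (om := om) (fun u i j Hij => proj1 (HB u i j Hij)).
  exists F; split.
  + move=> u i j Hij.
    have [_ H2] := HB u i j Hij.
    by case: (H2 (F u) (F (lshift_e u i)) (F (lshift_e (lshift_e u i) j)) (F (lshift_e u j))).
  + move=> u i j Hij.
    have [_ H2] := HB u i j Hij.
    by case: (H2 (F u) (F (lshift_e u i)) (F (lshift_e (lshift_e u i) j)) (F (lshift_e u j))).
Qed.
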